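(* Let $\mathcal B=(B_1,\dots,B_d)$ be a splitting of order $d$ of $B_J\in\mathbb R^{n\times n}$, let $\lambda\ne0$ be an eigenvalue of $T(\mathcal B)$ and let $[\alpha_1^T,\dots,\alpha_d^T]^T$ (with $\alpha_p\in\mathbb C^n$) be an associated eigenvector. Then $\alpha_p\ne0$ for every $p=1,\dots,d$.
   Context: For $B\in\mathbb R^{n\times n}$, a splitting of $B$ of order $d\ge1$ is an ordered $d$-tuple $\mathcal B=(B_1,\dots,B_d)$ of real $n\times n$ matrices with $B_p\neq O$ for all $p$, $\sum_{p=1}^d B_p=B$, and $B_p\circ B_q=O$ (Hadamard product) for $p\ne q$. The iteration matrix of $\mathcal B$ is the $dn\times dn$ matrix $T(\mathcal B)=(I_{dn}-\mathcal L)^{-1}\mathcal U$, where $\mathcal L,\mathcal U$ are $d\times d$ block matrices with $n\times n$ blocks, $\mathcal L_{ij}=B_j$ if $i>j$ and $O$ otherwise, $\mathcal U_{ij}=B_j$ if $i\le j$ and $O$ otherwise. *)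

(* Defs.v *)
From HB Require Import structures.
From mathcomp Require Import all_boot all_order all_algebra.
From mathcomp Require Import reals complex.
Set Implicit Arguments. Unset Strict Implicit. Unset Printing Implicit Defensive.
Import Order.TTheory GRing.Theory Num.Theory.
Local Open Scope ring_scope.
Local Open Scope complex_scope.

Section Splitting.
Variables (R : realType) (n d : nat).

Definition hadamard (A C : 'M[R]_n) : 'M[R]_n := map2_mx *%R A C.

Definition is_splitting (B : 'M[R]_n) (Bs : 'I_d -> 'M[R]_n) : Prop :=
  [/\ (0 < d)%N,
      forall p, Bs p != 0,
      \sum_(p < d) Bs p = B &
      forall p q, p != q -> hadamard (Bs p) (Bs q) = 0].

Definition splitL (Bs : 'I_d -> 'M[R]_n) :
  'M[R]_(\sum_(i < d) n, \sum_(j < d) n) :=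
  \mxblock_(i < d, j < d) (if (j < i)%N then Bs j else 0).

Definition splitU (Bs : 'I_d -> 'M[R]_n) :
  'M[R]_(\sum_(i < d) n, \sum_(j < d) n) :=
  \mxblock_(i < d, j < d) (if (i <= j)%N then Bs j else 0).

Definition iter_mx (Bs : 'I_d -> 'M[R]_n) : 'M[R]_(\sum_(i < d) n) :=
  invmx (1%:M - splitL Bs) *m splitU Bs.

Definition vblock (v : 'cV[R[i]]_(\sum_(i < d) n)) (p : 'I_d) : 'cV[R[i]]_n :=
  @submxcol _ d (fun=> n) 1 v p.

End Splitting.

(* Main.v *)
Require Import Defs.
From HB Require Import structures.
From mathcomp Require Import all_boot all_order all_algebra.
From mathcomp Require Import reals complex.
Import Order.TTheory GRing.Theory Num.Theory.
Local Open Scope ring_scope.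
Set Implicit Arguments. Unset Strict Implicit. Unset Printing Implicit Defensive.
Lemma map_mxblock (A B : nzRingType) (f : {rmorphism A -> B}) p q (p_ : 'I_p -> nat) (q_ : 'I_q -> nat)
  (B_ : forall i j, 'M[A]_(p_ i, q_ j)) :
  map_mx f (\mxblock_(i, j) B_ i j) = \mxblock_(i, j) map_mx f (B_ i j).
Proof.
apply/mxblockP => i j; rewrite mxblockK.
rewrite -[RHS](congr1 (map_mx f) (mxblockK B_ i j)).
move: (\mxblock_(i, j) B_ i j) => M.
by apply/matrixP => a b; rewrite !mxE.
Qed.

Lemma mulblk (K : pzRingType) n d (P : 'I_d -> 'I_d -> bool) (Bs : 'I_d -> 'M[K]_n) m
  (X : 'M[K]_(\sum_(i < d) n, m)) i :
  submxcol (\mxblock_(i0 < d, j < d) (if P i0 j then Bs j else 0) *m X) i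
  = \sum_(j | P i j) Bs j *m @submxcol _ d (fun=> n) _ X j.
Proof.
rewrite -[X in LHS]submxcolK mul_mxblock_mxrow mxcolK [RHS]big_mkcond.
by apply: eq_bigr => j _; case: ifP => // _; rewrite mul0mx.
Qed.
Lemma core (K : fieldType) n d (Bc : 'I_d -> 'M[K]_n) (a : 'I_d -> 'cV[K]_n) (lam : K) :
  lam != 0 ->
  (forall i : 'I_d, \sum_(j : 'I_d | (i <= j)%N) Bc j *m a j
      = lam *: (a i - \sum_(j : 'I_d | (j < i)%N) Bc j *m a j)) ->
  forall p, a p = 0 -> forall i, a i = 0.
Proof.
move=> lam0 H p ap.
case: d Bc a H p ap => [|d'] Bc a H p ap; first by case: p ap.
set S := \sum_(j : 'I_d'.+1) Bc j *m a j.
set f := fun i : 'I_d'.+1 => \sum_(j : 'I_d'.+1 | (j < i)%N) Bc j *m a j.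
have E i : lam *: a i = S - f i + lam *: f i.
  have Hs : \sum_(j : 'I_d'.+1 | (i <= j)%N) Bc j *m a j = S - f i.
    have -> : S = f i + \sum_(j : 'I_d'.+1 | (i <= j)%N) Bc j *m a j.
      rewrite /S (bigID (fun j : 'I_d'.+1 => (j < i)%N)) /=; congr (_ + _).
      by apply: eq_bigl => j; rewrite -leqNgt.
    by rewrite addrC addKr.
  by move: (H i); rewrite Hs -/(f i) scalerBr => ->; rewrite subrK.
have claim : forall p, a p = 0 -> forall i : 'I_d'.+1, (p <= i)%N -> a i = 0.
  move=> {}p {}ap.
  suff: forall k (i : 'I_d'.+1), (p <= i)%N -> (i < k)%N -> a i = 0.
    by move=> Hk i pi; apply: (Hk i.+1).
  elim=> [//|k IH] i pi ik.
  have fi : f i = f p.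
    rewrite /f (bigID (fun j : 'I_d'.+1 => (j < p)%N)) /=.
    rewrite [X in _ + X]big1 ?addr0.
      by apply: eq_bigl => j; case: (ltnP j p) => jp; rewrite ?andbT ?andbF //;
         apply: leq_trans jp pi.
    move=> j /andP [ji]; rewrite -leqNgt => pj.
    by rewrite (IH j pj) ?mulmx0 //; apply: leq_trans ji _.
  have : lam *: a i = lam *: a p by rewrite !E fi.
  by move/eqP; rewrite ap scaler0 scaler_eq0 (negbTE lam0) /= => /eqP.
have al : a ord_max = 0 by apply: (claim p) => //; rewrite -ltnS.
have Sf : S = f ord_max.
  rewrite /S (bigD1 ord_max) //= al mulmx0 add0r /f.
  by apply: eq_bigl => j; rewrite ltn_neqAle -ltnS ltn_ord andbT.
have S0 : S = 0.
  move: (E ord_max); rewrite al scaler0 -Sf subrr add0r Sf.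
  by move/eqP; rewrite eq_sym scaler_eq0 (negbTE lam0) /= => /eqP.
have a0 : a ord0 = 0.
  move: (E ord0); rewrite /f big_pred0 // scaler0 addr0 subr0 S0.
  by move/eqP; rewrite scaler_eq0 (negbTE lam0) /= => /eqP.
by move=> i; apply: (claim ord0).
Qed.

Lemma kerL (K : fieldType) n d (Bs : 'I_d -> 'M[K]_n) m (X : 'M[K]_(\sum_(i < d) n, m)) :
  (1%:M - \mxblock_(i < d, j < d) (if (j < i)%N then Bs j else 0)) *m X = 0 -> X = 0.
Proof.
move=> H.
have Hi i : @submxcol _ d (fun=> n) _ X i
    = \sum_(j : 'I_d | (j < i)%N) Bs j *m @submxcol _ d (fun=> n) _ X j.
  have := congr1 (fun M => @submxcol _ d (fun=> n) _ M i) H.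
  rewrite mulmxBl mul1mx submxcolB submxcol0 (mulblk (fun i0 j : 'I_d => (j < i0)%N)).
  by move/eqP; rewrite subr_eq0 => /eqP.
suff Z : forall k (i : 'I_d), (i < k)%N -> @submxcol _ d (fun=> n) _ X i = 0.
  rewrite -[X]submxcolK -(mxcol0 (p_ := fun=> n)); apply: eq_mxcol => i.
  exact: (Z i.+1).
elim=> [//|k IH] i ik; rewrite Hi big1 // => j ji.
by rewrite IH ?mulmx0 //; apply: leq_trans ji _.
Qed.

Lemma unitL (K : fieldType) n d (Bs : 'I_d -> 'M[K]_n) :
  (1%:M - \mxblock_(i < d, j < d) (if (j < i)%N then Bs j else 0)) \in unitmx.
Proof.
rewrite -row_full_unit -cokermx_eq0; apply/eqP; apply: kerL.
exact: mulmx_coker.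
Qed.

Lemma submxcolZ (K : pzRingType) d n m (c : K) (X : 'M[K]_(\sum_(i < d) n, m)) i :
  @submxcol _ d (fun=> n) _ (c *: X) i = c *: @submxcol _ d (fun=> n) _ X i.
Proof. by apply/matrixP => a b; rewrite !mxE. Qed.

Local Open Scope complex_scope.

Unset Implicit Arguments. Set Strict Implicit.

Theorem proposition2p2 (R : realType) (n d : nat) (BJ : 'M[R]_n)
    (Bs : 'I_d -> 'M[R]_n) (lambda : R[i])
    (v : 'cV[R[i]]_(\sum_(i < d) n)) :
  is_splitting BJ Bs ->
  lambda != 0 ->
  v != 0 ->
  map_mx (fun x : R => x%:C) (iter_mx Bs) *m v = lambda *: v ->
  forall p : 'I_d, vblock v p != 0.
Proof.
move=> _ lam0 v0 HT p.
have Hu : map_mx (fun x : R => x%:C) (1%:M - splitL Bs) \in unitmx.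
  by rewrite map_unitmx; apply: unitL.
have HU : map_mx (fun x : R => x%:C) (splitU Bs) *m v
   = lambda *: (map_mx (fun x : R => x%:C) (1%:M - splitL Bs) *m v).
  by rewrite scalemxAr -HT /iter_mx map_mxM map_invmx !mulmxA mulmxV // mul1mx.
have mb (P : 'I_d -> 'I_d -> bool) : \mxblock_(i < d, j < d) map_mx (fun x : R => x%:C) (if P i j then Bs j else 0)
    = \mxblock_(i < d, j < d) (if P i j then map_mx (fun x : R => x%:C) (Bs j) else 0).
  by apply: eq_mxblock => i j; case: ifP => // _; rewrite map_mx0.
move: HU; rewrite map_mxB map_mx1 /splitU /splitL !map_mxblock (mb (fun i j => (i <= j)%N)) (mb (fun i j => (j < i)%N)) => HU.
have Eq (i : 'I_d) : \sum_(j : 'I_d | (i <= j)%N) map_mx (fun x : R => x%:C) (Bs j) *m vblock v j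
   = lambda *: (vblock v i - \sum_(j : 'I_d | (j < i)%N) map_mx (fun x : R => x%:C) (Bs j) *m vblock v j).
  have := congr1 (fun M => @submxcol _ d (fun=> n) _ M i) HU.
  rewrite submxcolZ mulmxBl mul1mx submxcolB.
  by rewrite (mulblk (fun i0 j : 'I_d => (i0 <= j)%N)) (mulblk (fun i0 j : 'I_d => (j < i0)%N)).
apply/negP => /eqP vp.
have Z := core lam0 Eq vp.
move/eqP: v0; apply.
rewrite -[v]submxcolK -(mxcol0 (p_ := fun=> n)); apply: eq_mxcol => i.
exact: Z.
Qed.
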